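(* Let $k>0$ and consider the system of ODEs, in cylindrical coordinates $(r,\theta,z)$ on $\mathbb{R}^3$ with momenta $p_R,p_S$, \[ \dot r = p_R,\quad \dot\theta = \frac{p_S}{r^2},\quad \dot z = \frac{p_S}{2},\quad \dot p_R = \frac{p_S^2}{r^3} - \frac{2kr^3}{(r^4+16z^2)^{3/2}},\quad \dot p_S = -\frac{8kr^2 z}{(r^4+16z^2)^{3/2}}, \] with energy $H = \frac12\big(p_R^2+\frac{p_S^2}{r^2}\big) - \frac{k}{\sqrt{r^4+16z^2}}$ and first integral $F_3 = (2zp_R-rp_S)^2 + 4z^2\big(\frac{p_S^2}{r^2}+\frac{2k}{\sqrt{r^4+16z^2}}\big)$. The only trajectories of this system passing through the origin are straight lines in the plane $z=0$; along them $\theta$ is constant and $r(t)$ satisfies $\frac{\dot r^2}{2} = H + \frac{k}{r^2}$. These trajectories are exactly those with $F_3 = 0$.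
   Context: The system describes nonholonomic motion on the Heisenberg group in the potential $-k/\sqrt{r^4+16z^2}$ in cylindrical coordinates $x=r\cos\theta$, $y=r\sin\theta$. *)

(* Defs.v *)
From Stdlib Require Import Reals.
From Coquelicot Require Import Coquelicot.
Open Scope R_scope.

Definition Dn (r z : R) : R := r ^ 4 + 16 * z ^ 2.

Definition Hen (k r z pR pS : R) : R :=
  / 2 * (pR ^ 2 + pS ^ 2 / r ^ 2) - k / sqrt (Dn r z).

Definition F3 (k r z pR pS : R) : R :=
  (2 * z * pR - r * pS) ^ 2 + 4 * z ^ 2 * (pS ^ 2 / r ^ 2 + 2 * k / sqrt (Dn r z)).

Definition in_tint (a b : Rbar) (t : R) : Prop := Rbar_lt a t /\ Rbar_lt t b.

(* (r,th,z,pR,pS) solves the system on the nonempty open interval (a,b),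
   with r > 0 (cylindrical coordinates away from the z-axis, where the
   equations are defined).  (D)^(3/2) is written (sqrt D)^3. *)
Definition is_solution (k : R) (a b : Rbar) (r th z pR pS : R -> R) : Prop :=
  Rbar_lt a b /\
  forall t, in_tint a b t ->
    0 < r t /\
    is_derive r t (pR t) /\
    is_derive th t (pS t / r t ^ 2) /\
    is_derive z t (pS t / 2) /\
    is_derive pR t (pS t ^ 2 / r t ^ 3
                    - 2 * k * r t ^ 3 / (sqrt (Dn (r t) (z t))) ^ 3) /\
    is_derive pS t (- (8 * k * r t ^ 2 * z t) / (sqrt (Dn (r t) (z t))) ^ 3).

Definition maximal_solution (k : R) (a b : Rbar) (r th z pR pS : R -> R) : Prop :=
  is_solution k a b r th z pR pS /\
  forall (a' b' : Rbar) (r' th' z' pR' pS' : R -> R),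
    is_solution k a' b' r' th' z' pR' pS' ->
    Rbar_le a' a -> Rbar_le b b' ->
    (forall t, in_tint a b t ->
       r' t = r t /\ th' t = th t /\ z' t = z t /\ pR' t = pR t /\ pS' t = pS t) ->
    a' = a /\ b' = b.

(* the trajectory passes through the origin (r,z) = (0,0): it reaches it at a
   finite endpoint of its time interval *)
Definition passes_origin (a b : Rbar) (r z : R -> R) : Prop :=
  (exists a0, a = Finite a0 /\
     filterlim r (at_right a0) (locally 0) /\ filterlim z (at_right a0) (locally 0)) \/
  (exists b0, b = Finite b0 /\
     filterlim r (at_left b0) (locally 0) /\ filterlim z (at_left b0) (locally 0)).

Definition radial_line (k : R) (a b : Rbar) (r th z pR pS : R -> R) : Prop :=
  exists th0 E, forall t, in_tint a b t ->
    z t = 0 /\ th t = th0 /\ Hen k (r t) (z t) (pR t) (pS t) = E /\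
    (Derive r t) ^ 2 / 2 = E + k / r t ^ 2.

(* Main.v *)
Require Import Defs.
From Stdlib Require Import Reals Lra Psatz.
From Coquelicot Require Import Coquelicot.
Open Scope R_scope.

Lemma cube_aux x D : x * x = D -> x ^ 3 = x * D.
Proof. intros H; subst; ring. Qed.

Lemma deriv_inv k r z pR pS t :
  0 < r t ->
  is_derive r t (pR t) ->
  is_derive z t (pS t / 2) ->
  is_derive pR t (pS t ^ 2 / r t ^ 3 - 2 * k * r t ^ 3 / (sqrt (Dn (r t) (z t))) ^ 3) ->
  is_derive pS t (- (8 * k * r t ^ 2 * z t) / (sqrt (Dn (r t) (z t))) ^ 3) ->
  is_derive (fun t => Hen k (r t) (z t) (pR t) (pS t)) t 0 /\
  is_derive (fun t => F3 k (r t) (z t) (pR t) (pS t)) t 0.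
Proof.
intros Hr Dr Dz DpR DpS.
assert (HD : 0 < Dn (r t) (z t)) by (unfold Dn; pose proof (pow_lt (r t) 4 Hr); pose proof (pow2_ge_0 (z t)); lra).
assert (Hs : 0 < sqrt (Dn (r t) (z t))) by (apply sqrt_lt_R0; auto).
assert (E : r t * (r t * (r t * (r t * 1))) + 16 * (z t * (z t * 1)) = r t ^ 4 + 16 * z t ^ 2) by ring.
unfold Dn in *.
assert (Hs2 : sqrt (r t ^ 4 + 16 * z t ^ 2) * sqrt (r t ^ 4 + 16 * z t ^ 2) = r t ^ 4 + 16 * z t ^ 2) by (apply sqrt_sqrt; lra).
assert (Hs3 : sqrt (r t ^ 4 + 16 * z t ^ 2) ^ 3 = sqrt (r t ^ 4 + 16 * z t ^ 2) * (r t ^ 4 + 16 * z t ^ 2)) by (apply cube_aux; exact Hs2).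
rewrite Hs3 in DpR, DpS.
split; unfold Hen, F3, Dn; auto_derive;
 try (rewrite E; repeat split; try (eexists; eassumption); try lra; nra);
 replace (Derive (fun x => r x) t) with (pR t) by (symmetry; apply is_derive_unique; auto);
 try replace (Derive (fun x => z x) t) with (pS t / 2) by (symmetry; apply is_derive_unique; auto);
 replace (Derive (fun x => pR x) t) with (pS t ^ 2 / r t ^ 3 - 2 * k * r t ^ 3 / (sqrt (r t ^ 4 + 16 * z t ^ 2) * (r t ^ 4 + 16 * z t ^ 2))) by (symmetry; apply is_derive_unique; auto);
 replace (Derive (fun x => pS x) t) with (- (8 * k * r t ^ 2 * z t) / (sqrt (r t ^ 4 + 16 * z t ^ 2) * (r t ^ 4 + 16 * z t ^ 2))) by (symmetry; apply is_derive_unique; auto);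
 rewrite E, Hs2; set (s := sqrt _) in *; field; split; try lra; nra.
Qed.

Lemma in_tint_between a b t1 t2 x :
  in_tint a b t1 -> in_tint a b t2 -> t1 <= x <= t2 -> in_tint a b x.
Proof.
intros [H1 H2] [H3 H4] [H5 H6]; split.
- apply (Rbar_lt_le_trans a (Finite t1) (Finite x)); auto.
- apply (Rbar_le_lt_trans (Finite x) (Finite t2) b); auto.
Qed.

Lemma const_on a b f :
  (forall t, in_tint a b t -> is_derive f t 0) ->
  forall t1 t2, in_tint a b t1 -> in_tint a b t2 -> f t1 = f t2.
Proof.
intros Hd.
assert (W : forall t1 t2, t1 < t2 -> in_tint a b t1 -> in_tint a b t2 -> f t1 = f t2).
{ intros t1 t2 Hlt H1 H2.
  destruct (MVT_cor2 f (fun _ => 0) t1 t2 Hlt) as [c [Hc _]].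
  - intros c Hc. apply is_derive_Reals. apply Hd.
    apply in_tint_between with t1 t2; auto.
  - lra. }
intros t1 t2 H1 H2.
destruct (Rtotal_order t1 t2) as [h|[h|h]].
- apply W; auto.
- subst; auto.
- symmetry; apply W; auto.
Qed.

Lemma exists_in a b : Rbar_lt a b -> exists t, in_tint a b t.
Proof.
unfold in_tint.
destruct a as [a| |], b as [b| |]; simpl; intros H; try contradiction.
- exists ((a+b)/2); simpl; lra.
- exists (a+1); simpl; lra.
- exists (b-1); simpl; lra.
- exists 0; simpl; auto.
Qed.

Lemma sol_facts k a b r th z pR pS : is_solution k a b r th z pR pS ->
  forall t1 t2, in_tint a b t1 -> in_tint a b t2 ->
   Hen k (r t1) (z t1) (pR t1) (pS t1) = Hen k (r t2) (z t2) (pR t2) (pS t2) /\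
   F3 k (r t1) (z t1) (pR t1) (pS t1) = F3 k (r t2) (z t2) (pR t2) (pS t2).
Proof.
intros [_ Hs] t1 t2 H1 H2; split;
 [apply (const_on a b (fun t => Hen k (r t) (z t) (pR t) (pS t)))
 |apply (const_on a b (fun t => F3 k (r t) (z t) (pR t) (pS t)))]; auto; intros t Ht;
 destruct (Hs t Ht) as (Hr & Dr & Dth & Dz & DpR & DpS);
 apply (deriv_inv k r z pR pS t); auto.
Qed.
Lemma sqrtD_facts r z : 0 < r ->
  0 < Dn r z /\ 0 < sqrt (Dn r z) /\ sqrt (Dn r z) * sqrt (Dn r z) = Dn r z.
Proof.
intros Hr.
assert (HD : 0 < Dn r z) by (unfold Dn; pose proof (pow_lt r 4 Hr); pose proof (pow2_ge_0 z); lra).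
split; auto; split. apply sqrt_lt_R0; auto. apply sqrt_sqrt; lra.
Qed.

Lemma F3_split k r z pR pS : 0 < k -> 0 < r ->
  0 <= (2 * z * pR - r * pS) ^ 2 /\ 0 <= 4 * z ^ 2 * (pS ^ 2 / r ^ 2) /\
  0 < 2 * k / sqrt (Dn r z) /\
  F3 k r z pR pS = (2 * z * pR - r * pS) ^ 2 + 4 * z ^ 2 * (pS ^ 2 / r ^ 2) + 4 * z ^ 2 * (2 * k / sqrt (Dn r z)).
Proof.
intros Hk Hr. destruct (sqrtD_facts r z Hr) as (HD & Hs & Hs2).
split; [apply pow2_ge_0|]. split.
{ apply Rmult_le_pos. pose proof (pow2_ge_0 z); lra.
  unfold Rdiv; apply Rmult_le_pos. apply pow2_ge_0. left; apply Rinv_0_lt_compat, pow_lt; auto. }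
split. { unfold Rdiv; apply Rmult_lt_0_compat. lra. apply Rinv_0_lt_compat; auto. }
unfold F3; ring.
Qed.

Lemma F3_nonneg k r z pR pS : 0 < k -> 0 < r -> 0 <= F3 k r z pR pS.
Proof.
intros Hk Hr. destruct (F3_split k r z pR pS Hk Hr) as (h1 & h2 & h3 & ->).
pose proof (pow2_ge_0 z). nra.
Qed.

Lemma F3_zero k r z pR pS : 0 < k -> 0 < r -> F3 k r z pR pS = 0 -> z = 0 /\ pS = 0.
Proof.
intros Hk Hr H0. destruct (F3_split k r z pR pS Hk Hr) as (h1 & h2 & h3 & E).
pose proof (pow2_ge_0 z).
assert (Hz : z ^ 2 = 0) by nra.
assert (z = 0) by (simpl in Hz; rewrite Rmult_1_r in Hz; apply Rmult_integral in Hz; destruct Hz; auto). subst z.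
split; auto.
assert (Hp : (r * pS) ^ 2 = 0) by (rewrite E in H0; simpl in *; nra).
simpl in Hp; rewrite Rmult_1_r in Hp. apply Rmult_integral in Hp. destruct Hp as [Hp|Hp]; apply Rmult_integral in Hp; destruct Hp; lra.
Qed.

Lemma F3_bound k r z pR pS d : 0 < k -> 0 < r -> 0 < d <= 1 -> Rabs r < d -> Rabs z < d ->
  F3 k r z pR pS <= (20 * Rabs (Hen k r z pR pS) + 10 * k) * d.
Proof.
intros Hk Hr Hd Hrd Hzd.
destruct (sqrtD_facts r z Hr) as (HD & Hs & Hs2).
set (s := sqrt (Dn r z)) in *.
set (E := Hen k r z pR pS).
set (w := / s). set (q := pS / r).
assert (Hw : s * w = 1) by (unfold w; field; lra).
assert (Hw0 : 0 < w) by (unfold w; apply Rinv_0_lt_compat; auto).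
assert (HpS : pS = q * r) by (unfold q; field; lra).
assert (HE : pR ^ 2 + q ^ 2 = 2 * E + 2 * k * w).
{ unfold E, Hen, w, q. fold s. field. lra. }
assert (HF : F3 k r z pR pS = (2 * z * pR - r ^ 2 * q) ^ 2 + 4 * z ^ 2 * q ^ 2 + 8 * k * z ^ 2 * w).
{ unfold F3. fold s. rewrite HpS. unfold w. field. lra. }
unfold Dn in Hs2.
assert (Hr2s : r ^ 2 <= s) by nra.
assert (Hzs : 4 * Rabs z <= s).
{ assert (Rabs z ^ 2 = z ^ 2) by (apply pow2_abs).
  pose proof (Rabs_pos z). pose proof (pow_lt r 4 Hr). nra. }
assert (Hr4w : r ^ 4 * w <= r ^ 2).
{ assert (r ^ 2 * w <= 1) by nra. pose proof (pow2_ge_0 r). 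
  replace (r ^ 4 * w) with (r ^ 2 * (r ^ 2 * w)) by ring. nra. }
assert (Hz2w : z ^ 2 * w <= Rabs z / 4).
{ assert (Rabs z * w <= / 4) by nra.
  replace (z ^ 2) with (Rabs z * Rabs z) by (rewrite <- Rabs_mult; rewrite Rabs_right; [ring| pose proof (Rle_0_sqr z); unfold Rsqr in *; lra]).
  pose proof (Rabs_pos z). nra. }
assert (Hr0 : Rabs r = r) by (apply Rabs_right; lra).
rewrite Hr0 in Hrd.
assert (Hz2 : z ^ 2 <= d).
{ replace (z ^ 2) with (Rabs z * Rabs z) by (rewrite <- Rabs_mult; rewrite Rabs_right; [ring| pose proof (Rle_0_sqr z); unfold Rsqr in *; lra]).
  pose proof (Rabs_pos z). nra. }
assert (Hr2 : r ^ 2 <= d) by nra.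
assert (Hr4 : r ^ 4 <= d) by (pose proof (pow2_ge_0 r); replace (r ^ 4) with (r ^ 2 * r ^ 2) by ring; nra).
assert (Hstep : F3 k r z pR pS <= (8 * z ^ 2 + 2 * r ^ 4) * (2 * E) + 24 * k * (z ^ 2 * w) + 4 * k * (r ^ 4 * w)).
{ rewrite HF.
  assert ((2 * z * pR - r ^ 2 * q) ^ 2 <= 8 * z ^ 2 * pR ^ 2 + 2 * r ^ 4 * q ^ 2).
  { pose proof (pow2_ge_0 (2 * z * pR + r ^ 2 * q)). nra. }
  assert (0 <= z ^ 2 * pR ^ 2) by (apply Rmult_le_pos; apply pow2_ge_0).
  assert (0 <= r ^ 4 * pR ^ 2) by (apply Rmult_le_pos; [apply pow_le; lra| apply pow2_ge_0]).
  assert ((8 * z ^ 2 + 2 * r ^ 4) * (pR ^ 2 + q ^ 2) = (8 * z ^ 2 + 2 * r ^ 4) * (2 * E + 2 * k * w)) by (rewrite HE; auto).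
  nra. }
assert (HEa : (8 * z ^ 2 + 2 * r ^ 4) * (2 * E) <= 20 * Rabs E * d).
{ pose proof (Rle_abs E). pose proof (Rle_abs (- E)). rewrite Rabs_Ropp in *.
  pose proof (Rabs_pos E). pose proof (pow2_ge_0 z). pose proof (pow_le r 4 (Rlt_le _ _ Hr)).
  assert (8 * z ^ 2 + 2 * r ^ 4 <= 10 * d) by lra.
  assert ((8 * z ^ 2 + 2 * r ^ 4) * (2 * E) <= (8 * z ^ 2 + 2 * r ^ 4) * (2 * Rabs E)) by nra.
  nra. }
nra.
Qed.

Lemma ball0 (eps : posreal) y : ball 0 eps y -> Rabs y < eps.
Proof.
unfold ball; simpl; unfold AbsRing_ball, abs, minus, plus, opp; simpl.
rewrite Ropp_0, Rplus_0_r. auto.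
Qed.

Lemma F3_zero_filter k a b r th z pR pS (F : (R -> Prop) -> Prop) :
  ProperFilter F -> 0 < k ->
  is_solution k a b r th z pR pS ->
  F (fun t => in_tint a b t) ->
  filterlim r F (locally 0) -> filterlim z F (locally 0) ->
  forall t, in_tint a b t -> F3 k (r t) (z t) (pR t) (pS t) = 0.
Proof.
intros PF Hk Hsol HFi Hlr Hlz t Ht.
set (c := F3 k (r t) (z t) (pR t) (pS t)).
set (E := Hen k (r t) (z t) (pR t) (pS t)).
assert (Hr : 0 < r t) by (apply (proj2 Hsol t Ht)).
assert (Hc0 : 0 <= c) by (apply F3_nonneg; auto).
destruct Hc0 as [Hc|Hc]; [|auto].
exfalso.
set (M := 20 * Rabs E + 10 * k).
assert (HM : 0 < M) by (unfold M; pose proof (Rabs_pos E); lra).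
set (d := Rmin 1 (c / (2 * M))).
assert (Hd0 : 0 < d) by (apply Rmin_pos; [lra| apply Rdiv_lt_0_compat; lra]).
assert (Hd1 : d <= 1) by apply Rmin_l.
assert (Hd2 : d <= c / (2 * M)) by apply Rmin_r.
pose (eps := mkposreal d Hd0).
apply filterlim_locally with (eps := eps) in Hlr.
apply filterlim_locally with (eps := eps) in Hlz.
destruct (Hierarchy.filter_ex _ (filter_and _ _ HFi (filter_and _ _ Hlr Hlz))) as [u [Hu [Hru Hzu]]].
apply ball0 in Hru. apply ball0 in Hzu. simpl in Hru, Hzu.
destruct (sol_facts k a b r th z pR pS Hsol t u Ht Hu) as [HE HF].
assert (Hru0 : 0 < r u) by (apply (proj2 Hsol u Hu)).
pose proof (F3_bound k (r u) (z u) (pR u) (pS u) d Hk Hru0 (conj Hd0 Hd1) Hru Hzu) as Hb.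
rewrite <- HE, <- HF in Hb. fold c E M in Hb.
assert (M * d <= c / 2).
{ apply Rmult_le_compat_l with (r := M) in Hd2; [|lra].
  replace (M * (c / (2 * M))) with (c / 2) in Hd2 by (field; lra). lra. }
lra.
Qed.

Lemma at_right_in a0 b : Rbar_lt (Finite a0) b -> at_right a0 (fun t => in_tint (Finite a0) b t).
Proof.
intros H. destruct b as [b| |]; simpl in H; try contradiction.
- assert (Hp : 0 < b - a0) by lra.
  exists (mkposreal _ Hp). intros y Hy Hlt. unfold in_tint; simpl.
  unfold ball in Hy; simpl in Hy; unfold AbsRing_ball, abs, minus, plus, opp in Hy; simpl in Hy.
  split; auto. apply Rabs_lt_between in Hy. lra.
- exists (mkposreal 1 Rlt_0_1). intros y _ Hlt. split; simpl; auto.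
Qed.

Lemma at_left_in a b0 : Rbar_lt a (Finite b0) -> at_left b0 (fun t => in_tint a (Finite b0) t).
Proof.
intros H. destruct a as [a| |]; simpl in H; try contradiction.
- assert (Hp : 0 < b0 - a) by lra.
  exists (mkposreal _ Hp). intros y Hy Hlt. unfold in_tint; simpl.
  unfold ball in Hy; simpl in Hy; unfold AbsRing_ball, abs, minus, plus, opp in Hy; simpl in Hy.
  split; auto. apply Rabs_lt_between in Hy. lra.
- exists (mkposreal 1 Rlt_0_1). intros y _ Hlt. split; simpl; auto.
Qed.

Lemma passes_F3 k a b r th z pR pS : 0 < k ->
  is_solution k a b r th z pR pS -> passes_origin a b r z ->
  forall t, in_tint a b t -> F3 k (r t) (z t) (pR t) (pS t) = 0.
Proof.
intros Hk Hsol [[a0 [-> [Hr Hz]]]|[b0 [-> [Hr Hz]]]].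
- apply (F3_zero_filter k _ b r th z pR pS (at_right a0)); auto.
  apply at_right_proper_filter. apply at_right_in. apply Hsol.
- apply (F3_zero_filter k a _ r th z pR pS (at_left b0)); auto.
  apply at_left_proper_filter. apply at_left_in. apply Hsol.
Qed.

Lemma radial_of_F3 k a b r th z pR pS : 0 < k ->
  is_solution k a b r th z pR pS ->
  (forall t, in_tint a b t -> F3 k (r t) (z t) (pR t) (pS t) = 0) ->
  radial_line k a b r th z pR pS.
Proof.
intros Hk Hsol HF.
destruct (exists_in a b (proj1 Hsol)) as [t0 Ht0].
assert (Hzp : forall t, in_tint a b t -> z t = 0 /\ pS t = 0).
{ intros t Ht. apply (F3_zero k (r t) (z t) (pR t) (pS t)); auto. apply (proj2 Hsol t Ht). }
exists (th t0), (Hen k (r t0) (z t0) (pR t0) (pS t0)).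
intros t Ht.
destruct (proj2 Hsol t Ht) as (Hr & Dr & Dth & Dz & DpR & DpS).
destruct (Hzp t Ht) as [Hz HpS].
split; auto. split.
{ apply (const_on a b th); auto. intros u Hu.
  destruct (proj2 Hsol u Hu) as (_ & _ & Dth' & _).
  destruct (Hzp u Hu) as [_ HpS']. rewrite HpS' in Dth'.
  replace 0 with (0 / r u ^ 2) by (unfold Rdiv; ring). auto. }
split.
{ apply (sol_facts k a b r th z pR pS Hsol t t0 Ht Ht0). }
rewrite (is_derive_unique _ _ _ Dr).
rewrite <- (proj1 (sol_facts k a b r th z pR pS Hsol t t0 Ht Ht0)).
unfold Hen, Dn. rewrite Hz, HpS.
replace (r t ^ 4 + 16 * 0 ^ 2) with ((r t ^ 2) ^ 2) by ring.
rewrite sqrt_pow2 by (apply pow_le; lra).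
field. lra.
Qed.
Definition qf (A B C t0 t : R) : R := A * (t - t0) ^ 2 + B * (t - t0) + C.

Lemma qf_factor A B C d s : A <> 0 -> d * d = B ^ 2 - 4 * A * C ->
  A * s ^ 2 + B * s + C = A * (s - (- B + d) / (2 * A)) * (s - (- B - d) / (2 * A)).
Proof.
intros HA Hd.
replace C with ((B ^ 2 - d * d) / (4 * A)) at 1 by (rewrite Hd; field; auto).
field; auto.
Qed.

Lemma quad_interval (A B C t0 : R) : 0 < C -> 0 < B ^ 2 - 4 * A * C ->
  exists al be : Rbar, Rbar_lt al t0 /\ Rbar_lt t0 be /\
   (forall t, in_tint al be t -> 0 < qf A B C t0 t) /\
   (forall x, al = Finite x -> qf A B C t0 x = 0) /\
   (forall x, be = Finite x -> qf A B C t0 x = 0) /\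
   ((exists x, al = Finite x) \/ (exists x, be = Finite x)).
Proof.
intros HC HD.
unfold qf.
destruct (Rtotal_order A 0) as [HA|[HA|HA]].
-
  set (d := sqrt (B ^ 2 - 4 * A * C)).
  assert (Hd2 : d * d = B ^ 2 - 4 * A * C) by (apply sqrt_sqrt; lra).
  assert (Hd0 : 0 <= d) by apply sqrt_pos.
  set (u := (- B + d) / (2 * A)). set (v := (- B - d) / (2 * A)).
  assert (Hu : 2 * A * u = - B + d) by (unfold u; field; lra).
  assert (Hv : 2 * A * v = - B - d) by (unfold v; field; lra).
  assert (HAC : 0 < - 4 * A * C) by nra.
  assert (HdB1 : B < d).
  { destruct (Rlt_or_le B d) as [h|h]; auto. exfalso. assert (d * d <= B * B) by (apply Rmult_le_compat; lra). nra. }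
  assert (HdB2 : - B < d).
  { destruct (Rlt_or_le (- B) d) as [h|h]; auto. exfalso. assert (d * d <= (- B) * (- B)) by (apply Rmult_le_compat; lra). nra. }
  assert (Hu0 : u < 0).
  { destruct (Rlt_or_le u 0) as [h|h]; auto; exfalso. assert (0 <= - A * u) by (apply Rmult_le_pos; lra). lra. }
  assert (Hv0 : 0 < v).
  { destruct (Rlt_or_le 0 v) as [h|h]; auto; exfalso. assert (0 <= - A * - v) by (apply Rmult_le_pos; lra). lra. }
  assert (Hf : forall s, A * s ^ 2 + B * s + C = A * (s - u) * (s - v)) by (intros; apply qf_factor; lra).
  exists (Finite (t0 + u)), (Finite (t0 + v)).
  split; [cbn; lra|]. split; [cbn; lra|]. split.
  { intros t [H1 H2]; cbn in H1, H2. rewrite Hf.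
    assert (0 < (- A) * (t - t0 - u) * (- (t - t0 - v))) by (repeat apply Rmult_lt_0_compat; lra). lra. }
  split. { intros x Hx; injection Hx; intros <-. rewrite Hf. replace (t0 + u - t0 - u) with 0 by ring. ring. }
  split. { intros x Hx; injection Hx; intros <-. rewrite Hf. replace (t0 + v - t0 - v) with 0 by ring. ring. }
  left; eauto.
-
  subst A.
  destruct (Rtotal_order B 0) as [HB'|[HB'|HB']]; [| subst; lra |].
  + exists m_infty, (Finite (t0 - C / B)).
    assert (HCB : 0 < - (C / B)) by (replace (- (C / B)) with (C / (- B)) by (field; lra); apply Rdiv_lt_0_compat; lra).
    split; [cbn; auto|]. split; [cbn; lra|]. split.
    { intros t [H1 H2]; cbn in H1, H2.
      assert (0 < (- B) * (- (t - t0 + C / B))) by (apply Rmult_lt_0_compat; lra).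
      replace (0 * (t - t0) ^ 2 + B * (t - t0) + C) with ((- B) * (- (t - t0 + C / B))) by (field; lra). lra. }
    split. { intros x Hx; discriminate. }
    split. { intros x Hx; injection Hx; intros <-. field; lra. }
    right; eauto.
  + exists (Finite (t0 - C / B)), p_infty.
    assert (HCB : 0 < C / B) by (apply Rdiv_lt_0_compat; lra).
    split; [cbn; lra|]. split; [cbn; auto|]. split.
    { intros t [H1 H2]; cbn in H1, H2.
      assert (0 < B * (t - t0 + C / B)) by (apply Rmult_lt_0_compat; lra).
      replace (0 * (t - t0) ^ 2 + B * (t - t0) + C) with (B * (t - t0 + C / B)) by (field; lra). lra. }
    split. { intros x Hx; injection Hx; intros <-. field; lra. }
    split. { intros x Hx; discriminate. }
    left; eauto.
-
  set (d := sqrt (B ^ 2 - 4 * A * C)).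
  assert (Hd2 : d * d = B ^ 2 - 4 * A * C) by (apply sqrt_sqrt; lra).
  assert (Hd0 : 0 <= d) by apply sqrt_pos.
  set (u := (- B + d) / (2 * A)). set (v := (- B - d) / (2 * A)).
  assert (Hu : 2 * A * u = - B + d) by (unfold u; field; lra).
  assert (Hv : 2 * A * v = - B - d) by (unfold v; field; lra).
  assert (HAC : 0 < 4 * A * C) by nra.
  assert (Hvu : v <= u).
  { destruct (Rle_or_lt v u) as [h|h]; auto; exfalso. assert (0 < A * (v - u)) by (apply Rmult_lt_0_compat; lra). lra. }
  assert (Hf : forall s, A * s ^ 2 + B * s + C = A * (s - u) * (s - v)) by (intros; apply qf_factor; lra).
  destruct (Rtotal_order B 0) as [HB'|[HB'|HB']]; [| subst; nra |].
  + assert (HdB : d < - B).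
    { destruct (Rlt_or_le d (- B)) as [h|h]; auto. exfalso. assert ((- B) * (- B) <= d * d) by (apply Rmult_le_compat; lra). nra. }
    assert (Hv0 : 0 < v).
    { destruct (Rlt_or_le 0 v) as [h|h]; auto; exfalso. assert (0 <= A * - v) by (apply Rmult_le_pos; lra). lra. }
    exists m_infty, (Finite (t0 + v)).
    split; [cbn; auto|]. split; [cbn; lra|]. split.
    { intros t [H1 H2]; cbn in H1, H2. rewrite Hf.
      assert (0 < A * (- (t - t0 - u)) * (- (t - t0 - v))) by (repeat apply Rmult_lt_0_compat; lra). lra. }
    split. { intros x Hx; discriminate. }
    split. { intros x Hx; injection Hx; intros <-. rewrite Hf. replace (t0 + v - t0 - v) with 0 by ring. ring. }
    right; eauto.
  + assert (HdB : d < B).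
    { destruct (Rlt_or_le d B) as [h|h]; auto. exfalso. assert (B * B <= d * d) by (apply Rmult_le_compat; lra). nra. }
    assert (Hu0 : u < 0).
    { destruct (Rlt_or_le u 0) as [h|h]; auto; exfalso. assert (0 <= A * u) by (apply Rmult_le_pos; lra). lra. }
    exists (Finite (t0 + u)), p_infty.
    split; [cbn; lra|]. split; [cbn; auto|]. split.
    { intros t [H1 H2]; cbn in H1, H2. rewrite Hf.
      assert (0 < A * (t - t0 - u) * (t - t0 - v)) by (repeat apply Rmult_lt_0_compat; lra). lra. }
    split. { intros x Hx; injection Hx; intros <-. rewrite Hf. replace (t0 + u - t0 - u) with 0 by ring. ring. }
    split. { intros x Hx; discriminate. }
    left; eauto.
Qed.

Lemma qf_derive A B C t0 t : is_derive (qf A B C t0) t (2 * A * (t - t0) + B).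
Proof. unfold qf. auto_derive; auto. ring. Qed.

Lemma sqrt_Dn_sq q : 0 < q -> sqrt (Dn (sqrt q) 0) = q.
Proof.
intros Hq. unfold Dn.
replace (sqrt q ^ 4 + 16 * 0 ^ 2) with ((sqrt q ^ 2) ^ 2) by ring.
rewrite pow2_sqrt by lra. apply sqrt_pow2; lra.
Qed.

Lemma ext_sol k A B C t0 (al be : Rbar) th0 : 0 < k -> B ^ 2 - 4 * A * C = 8 * k ->
  Rbar_lt al be -> (forall t, in_tint al be t -> 0 < qf A B C t0 t) ->
  is_solution k al be (fun t => sqrt (qf A B C t0 t)) (fun _ => th0) (fun _ => 0)
    (fun t => (2 * A * (t - t0) + B) / (2 * sqrt (qf A B C t0 t))) (fun _ => 0).
Proof.
intros Hk HD Hab Hq. split; auto. intros t Ht.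
specialize (Hq t Ht).
assert (Hs : 0 < sqrt (qf A B C t0 t)) by (apply sqrt_lt_R0; auto).
rewrite sqrt_Dn_sq by auto.
split; auto. split.
{ apply (is_derive_sqrt (qf A B C t0) t). apply qf_derive. auto. }
split. { replace (0 / sqrt (qf A B C t0 t) ^ 2) with 0 by (field; lra). apply (is_derive_const th0 t). }
split. { replace (0 / 2) with 0 by field. apply (is_derive_const 0 t). }
split.
2:{ replace (- (8 * k * sqrt (qf A B C t0 t) ^ 2 * 0) / qf A B C t0 t ^ 3) with 0 by (field; lra). apply (is_derive_const 0 t). }
assert (Dq := qf_derive A B C t0 t).
auto_derive.
- repeat split; try (eexists; eassumption); try lra.
- replace (Derive (fun x => qf A B C t0 x) t) with (2 * A * (t - t0) + B) by (symmetry; apply is_derive_unique; auto).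
  assert (Hid : (2 * A * (t - t0) + B) ^ 2 - 4 * A * qf A B C t0 t = 8 * k) by (unfold qf; rewrite <- HD; ring).
  assert (Hu2 : sqrt (qf A B C t0 t) * sqrt (qf A B C t0 t) = qf A B C t0 t) by (apply sqrt_sqrt; lra).
  set (u := sqrt (qf A B C t0 t)) in *. set (Q := qf A B C t0 t) in *.
  set (L := 2 * A * (t - t0) + B) in *.
  replace (2 * A * (t + - t0) + B) with L by (unfold L; ring).
  assert (Hk' : k = (L ^ 2 - 4 * A * (u * u)) / 8) by (rewrite Hu2; lra).
  rewrite Hk'. rewrite <- Hu2. field. lra.
Qed.

Lemma sqrt_Dn_aux r : 0 < r -> sqrt (Dn r 0) = r ^ 2.
Proof. intros Hr. unfold Dn. replace (r ^ 4 + 16 * 0 ^ 2) with ((r ^ 2) ^ 2) by ring. apply sqrt_pow2. apply pow_le; lra. Qed.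

Lemma Hen_radial k r p : 0 < r -> Hen k r 0 p 0 = p ^ 2 / 2 - k / r ^ 2.
Proof.
intros Hr. unfold Hen, Dn.
replace (r ^ 4 + 16 * 0 ^ 2) with ((r ^ 2) ^ 2) by ring.
rewrite sqrt_pow2 by (apply pow_le; lra). field. lra.
Qed.

Lemma backward k a b r th z pR pS : 0 < k ->
  maximal_solution k a b r th z pR pS ->
  (exists t, in_tint a b t /\ F3 k (r t) (z t) (pR t) (pS t) = 0) ->
  passes_origin a b r z.
Proof.
intros Hk [Hsol Hmax] [t0 [Ht0 HF0]].
assert (HF : forall t, in_tint a b t -> F3 k (r t) (z t) (pR t) (pS t) = 0).
{ intros t Ht. rewrite (proj2 (sol_facts k a b r th z pR pS Hsol t t0 Ht Ht0)). auto. }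
assert (Hzp : forall t, in_tint a b t -> z t = 0 /\ pS t = 0).
{ intros t Ht. apply (F3_zero k (r t) (z t) (pR t) (pS t)); auto. apply (proj2 Hsol t Ht). }
set (E := Hen k (r t0) (z t0) (pR t0) (pS t0)).
assert (HE : forall t, in_tint a b t -> pR t ^ 2 / 2 - k / r t ^ 2 = E).
{ intros t Ht. destruct (Hzp t Ht) as [Hz HpS].
  rewrite <- Hen_radial by (apply (proj2 Hsol t Ht)). rewrite <- Hz at 1. rewrite <- HpS.
  apply (sol_facts k a b r th z pR pS Hsol t t0 Ht Ht0). }
set (r0 := r t0). set (p0 := pR t0).
assert (Hr0 : 0 < r0) by (apply (proj2 Hsol t0 Ht0)).
set (A := 2 * E). set (B := 2 * r0 * p0). set (C := r0 ^ 2).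
assert (Cl1 : forall t, in_tint a b t -> 2 * r t * pR t = 2 * A * (t - t0) + B).
{ assert (Hc : forall t, in_tint a b t -> 2 * r t * pR t - 2 * A * (t - t0) = 2 * r t0 * pR t0 - 2 * A * (t0 - t0)).
  { intros t Ht. apply (const_on a b (fun t => 2 * r t * pR t - 2 * A * (t - t0))); auto.
    intros u Hu. destruct (proj2 Hsol u Hu) as (Hr & Dr & _ & _ & DpR & _).
    destruct (Hzp u Hu) as [Hz HpS]. rewrite Hz, HpS in DpR.
    rewrite sqrt_Dn_aux in DpR by auto.
    pose proof (HE u Hu) as HEu.
    auto_derive.
    - repeat split; eexists; eassumption.
    - replace (Derive (fun x => r x) u) with (pR u) by (symmetry; apply is_derive_unique; auto).
      replace (Derive (fun x => pR x) u) with (0 ^ 2 / r u ^ 3 - 2 * k * r u ^ 3 / (r u ^ 2) ^ 3) by (symmetry; apply is_derive_unique; auto).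
      unfold A. rewrite <- HEu. field. lra. }
  intros t Ht. specialize (Hc t Ht). unfold B, r0, p0. lra. }
assert (Cl2 : forall t, in_tint a b t -> r t ^ 2 = qf A B C t0 t).
{ assert (Hc : forall t, in_tint a b t -> r t ^ 2 - qf A B C t0 t = r t0 ^ 2 - qf A B C t0 t0).
  { intros t Ht. apply (const_on a b (fun t => r t ^ 2 - qf A B C t0 t)); auto.
    intros u Hu. destruct (proj2 Hsol u Hu) as (Hr & Dr & _).
    pose proof (Cl1 u Hu) as C1.
    pose proof (qf_derive A B C t0 u) as Dq.
    auto_derive.
    - repeat split; eexists; eassumption.
    - replace (Derive (fun x => r x) u) with (pR u) by (symmetry; apply is_derive_unique; auto).
      replace (Derive (fun x => qf A B C t0 x) u) with (2 * A * (u - t0) + B) by (symmetry; apply is_derive_unique; auto).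
      lra. }
  intros t Ht. specialize (Hc t Ht). unfold qf in *. unfold C, r0 in *. 
  replace (t0 - t0) with 0 in Hc by ring. lra. }
assert (HDelta : B ^ 2 - 4 * A * C = 8 * k).
{ pose proof (HE t0 Ht0) as HE0. fold r0 p0 in HE0. unfold A, B, C. rewrite <- HE0. field. lra. }
destruct (quad_interval A B C t0) as (al & be & Hal & Hbe & Hpos & Hrootl & Hrootr & Hfin).
{ unfold C. apply pow_lt; auto. }
{ lra. }
assert (Hqr : forall t, in_tint a b t -> sqrt (qf A B C t0 t) = r t).
{ intros t Ht. rewrite <- Cl2 by auto. apply sqrt_pow2. left; apply (proj2 Hsol t Ht). }
assert (Hla : Rbar_le al a).
{ destruct al as [x| |]; [| simpl in Hal; contradiction | destruct a; simpl; auto].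
  destruct (Rbar_le_lt_dec (Finite x) a) as [h|h]; auto. exfalso.
  assert (Hx : in_tint a b x) by (split; auto; apply (Rbar_lt_trans (Finite x) (Finite t0) b); auto; apply Ht0).
  pose proof (Cl2 x Hx) as Hc. rewrite (Hrootl x eq_refl) in Hc.
  pose proof (proj1 (proj2 Hsol x Hx)). assert (0 < r x ^ 2) by (apply pow_lt; auto). lra. }
assert (Hbb : Rbar_le b be).
{ destruct be as [x| |]; [| destruct b; simpl; auto | simpl in Hbe; contradiction].
  destruct (Rbar_le_lt_dec b (Finite x)) as [h|h]; auto. exfalso.
  assert (Hx : in_tint a b x) by (split; auto; apply (Rbar_lt_trans a (Finite t0) (Finite x)); auto; apply Ht0).
  pose proof (Cl2 x Hx) as Hc. rewrite (Hrootr x eq_refl) in Hc.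
  pose proof (proj1 (proj2 Hsol x Hx)). assert (0 < r x ^ 2) by (apply pow_lt; auto). lra. }
assert (Hext := ext_sol k A B C t0 al be (th t0) Hk HDelta (Rbar_lt_trans al (Finite t0) be Hal Hbe) Hpos).
destruct (Hmax _ _ _ _ _ _ _ Hext Hla Hbb) as [-> ->].
{ intros t Ht. destruct (Hzp t Ht) as [Hz HpS].
  split. apply Hqr; auto.
  split. { apply (const_on a b th); auto. intros u Hu.
    destruct (proj2 Hsol u Hu) as (_ & _ & Dth' & _).
    destruct (Hzp u Hu) as [_ HpS']. rewrite HpS' in Dth'.
    replace 0 with (0 / r u ^ 2) by (unfold Rdiv; ring). auto. }
  split. auto.
  split. { rewrite Hqr by auto. rewrite <- Cl1 by auto. field. pose proof (proj1 (proj2 Hsol t Ht)). lra. }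
  auto. }
assert (Hcont : forall x, qf A B C t0 x = 0 -> filterlim (fun t => sqrt (qf A B C t0 t)) (locally x) (locally 0)).
{ intros x Hx. 
  assert (Hc : continuous (fun t => sqrt (qf A B C t0 t)) x).
  { apply (continuous_comp (qf A B C t0) sqrt x).
    - apply (ex_derive_continuous (K:=R_AbsRing) (V:=R_NormedModule) (qf A B C t0) x). eexists; apply qf_derive.
    - apply continuity_pt_filterlim. apply continuity_pt_sqrt. lra. }
  unfold continuous in Hc. rewrite Hx, sqrt_0 in Hc. exact Hc. }
destruct Hfin as [[x ->]|[x ->]].
- left. exists x. split; auto.
  assert (Hin := at_right_in x b (Rbar_lt_trans (Finite x) (Finite t0) b Hal (proj2 Ht0))).
  split.
  + apply filterlim_ext_loc with (fun t => sqrt (qf A B C t0 t)).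
    { revert Hin. apply filter_imp. intros t Ht. apply Hqr; auto. }
    apply (filterlim_filter_le_1 (F := locally x)). apply filter_le_within.
    apply Hcont. apply Hrootl; auto.
  + apply filterlim_ext_loc with (fun _ => 0).
    { revert Hin. apply filter_imp. intros t Ht. symmetry. apply (Hzp t Ht). }
    apply filterlim_const.
- right. exists x. split; auto.
  assert (Hin := at_left_in a x (Rbar_lt_trans a (Finite t0) (Finite x) (proj1 Ht0) Hbe)).
  split.
  + apply filterlim_ext_loc with (fun t => sqrt (qf A B C t0 t)).
    { revert Hin. apply filter_imp. intros t Ht. apply Hqr; auto. }
    apply (filterlim_filter_le_1 (F := locally x)). apply filter_le_within.
    apply Hcont. apply Hrootr; auto.
  + apply filterlim_ext_loc with (fun _ => 0).
    { revert Hin. apply filter_imp. intros t Ht. symmetry. apply (Hzp t Ht). }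
    apply filterlim_const.
Qed.

Theorem theorem4 (k : R) (hk : 0 < k) :
  (forall (a b : Rbar) (r th z pR pS : R -> R),
     is_solution k a b r th z pR pS ->
     passes_origin a b r z ->
     radial_line k a b r th z pR pS) /\
  (forall (a b : Rbar) (r th z pR pS : R -> R),
     maximal_solution k a b r th z pR pS ->
     (passes_origin a b r z <->
      exists t, in_tint a b t /\ F3 k (r t) (z t) (pR t) (pS t) = 0)).
Proof.
split.
- intros a b r th z pR pS Hsol Hpo. apply radial_of_F3; auto.
  apply (passes_F3 k a b r th z pR pS); auto.
- intros a b r th z pR pS Hmax. split.
  + intros Hpo. destruct (exists_in a b (proj1 (proj1 Hmax))) as [t Ht].
    exists t. split; auto. apply (passes_F3 k a b r th z pR pS); auto. apply Hmax.
  + apply (backward k a b r th z pR pS); auto.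
Qed.
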